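(* Let Assumption 1 hold. For every real $c_1,\dots,c_n$, every initial state $x_0=x(0)\in\mathbb{R}^n$ of the plant and every locally integrable input $u(\cdot)$, the state $\chi(t)=\mathrm{col}(\zeta(t),\mu(t))\in\mathbb{R}^{2n}$ of the filters satisfies, for all $t\ge 0$, \[\dot\chi(t)=A_{\mathrm f}\chi(t)+B_{\mathrm f}u(t)+G_{\mathrm f}\,\mathrm{e}^{A_{\mathrm r}^\top t}x_0 ,\] and the pair $(A_{\mathrm f},B_{\mathrm f})$ is reachable.
   Context: Fix $n\ge 1$ and real numbers $a_1,\dots,a_n,b_1,\dots,b_n$. The plant is the continuous-time SISO system $y^{(n)}+a_1y^{(n-1)}+\dots+a_ny=b_1u^{(n-1)}+\dots+b_nu$, represented in observability canonical form $\dot x=Ax+Bu$, $y=Cx$, $x(t)\in\mathbb{R}^n$, where $C=[0_{1,n-1}\;1]$, $A$ is the $n\times n$ matrix whose first $n-1$ columns are $\begin{bmatrix}0_{1,n-1}\\ I_{n-1}\end{bmatrix}$ and whose last column is $(-a_n,\dots,-a_1)^\top$, and $B=(b_n,\dots,b_1)^\top$. Assumption 1: the polynomials $s^n+a_1s^{n-1}+\dots+a_n$ and $b_1s^{n-1}+\dots+b_n$ are coprime (no common complex root). For real parameters $c_1,\dots,c_n$, $A_{\mathrm r}\in\mathbb{R}^{n\times n}$ is the matrix whose first $n-1$ rows are $[0_{n-1,1}\;I_{n-1}]$ and whose last row is $(-c_n,\dots,-c_1)$, and $B_{\mathrm r}=(0,\dots,0,1)^\top\in\mathbb{R}^n$.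 The filters are $\dot\zeta=A_{\mathrm r}\zeta+B_{\mathrm r}u$, $\zeta(0)=0$, and $\dot\mu=A_{\mathrm r}\mu+B_{\mathrm r}y$, $\mu(0)=0$, with $\chi=\mathrm{col}(\zeta,\mu)$. Define $A_{\mathrm f}=\begin{bmatrix}A_{\mathrm r}&0_{n,n}\\ L_b& A_a\end{bmatrix}\in\mathbb{R}^{2n\times 2n}$, where $L_b\in\mathbb{R}^{n\times n}$ has all rows zero except the last, which equals $(b_n,\dots,b_1)$, and $A_a\in\mathbb{R}^{n\times n}$ has first $n-1$ rows $[0_{n-1,1}\;I_{n-1}]$ and last row $(-a_n,\dots,-a_1)$; $B_{\mathrm f}=\mathrm{col}(0_{n-1,1},1,0_{n,1})\in\mathbb{R}^{2n}$; and $G_{\mathrm f}\in\mathbb{R}^{2n\times n}$ is the matrix whose only nonzero entry is a $1$ in position $(2n,n)$. *)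

(* Defs.v *)
From HB Require Import structures.
From mathcomp Require Import all_boot all_order all_algebra.
From mathcomp Require Import all_classical all_reals all_analysis.
Set Implicit Arguments. Unset Strict Implicit. Unset Printing Implicit Defensive.
Import Order.TTheory GRing.Theory Num.Theory.
Import numFieldNormedType.Exports.
Local Open Scope classical_set_scope.
Local Open Scope ring_scope.

Section Defs.
Context {R : realType}.

(* Coefficient vectors: for k : 'I_n, [a k] stands for a_{k+1}.
   rev_ord i (value n-1-i) is used to list (a_n, ..., a_1) top-to-bottom. *)

Definition den_poly n (a : 'I_n -> R) : {poly R} :=
  'X^n + \sum_(k < n) a k *: 'X^(n.-1 - k).
Definition num_poly n (b : 'I_n -> R) : {poly R} :=
  \sum_(k < n) b k *: 'X^(n.-1 - k).

Definition A_obs n (a : 'I_n -> R) : 'M[R]_n :=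
  \matrix_(i, j) if (val j == n.-1)%N then - a (rev_ord i)
                 else ((val i == (val j).+1)%N)%:R.
Definition B_obs n (b : 'I_n -> R) : 'cV[R]_n := \col_i b (rev_ord i).
Definition C_obs n : 'rV[R]_n := \row_j ((val j == n.-1)%N)%:R.

Definition A_comp n (c : 'I_n -> R) : 'M[R]_n :=
  \matrix_(i, j) if (val i == n.-1)%N then - c (rev_ord j)
                 else ((val j == (val i).+1)%N)%:R.
Definition A_r n (c : 'I_n -> R) : 'M[R]_n := A_comp c.
Definition B_r n : 'cV[R]_n := \col_i ((val i == n.-1)%N)%:R.
Definition A_a n (a : 'I_n -> R) : 'M[R]_n := A_comp a.
Definition L_b n (b : 'I_n -> R) : 'M[R]_n :=
  \matrix_(i, j) if (val i == n.-1)%N then b (rev_ord j) else 0.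

Definition A_f n (a b c : 'I_n -> R) : 'M[R]_(n + n) :=
  block_mx (A_r c) 0 (L_b b) (A_a a).
Definition B_f n : 'cV[R]_(n + n) := col_mx (B_r n) 0.
Definition G_f n : 'M[R]_(n + n, n) :=
  \matrix_(i, j) (((val i == (n + n).-1) && (val j == n.-1))%N)%:R.

Definition mexp n (M : 'M[R]_n) (t : R) : 'M[R]_n :=
  \matrix_(i, j) limn (fun N : nat => \sum_(k < N) (t ^+ k / (k`!)%:R) * (M ^+ k) i j).

Definition ode_sol k (z : R -> 'cV[R]_k) (F : R -> 'cV[R]_k) : Prop :=
  forall t, 0 <= t -> forall i : 'I_k,
    (@lebesgue_measure R).-integrable `[0, t] (fun s => (F s i 0)%:E) /\
    z t i 0 = z 0 i 0 + \int[@lebesgue_measure R]_(s in `[0, t]) F s i 0.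

Definition loc_integrable (u : R -> R) : Prop :=
  forall t, 0 <= t -> (@lebesgue_measure R).-integrable `[0, t] (fun s => (u s)%:E).

Definition reach_mx k (A : 'M[R]_k) (B : 'cV[R]_k) : 'M[R]_k :=
  \matrix_(i, j) (A ^+ j *m B) i 0.
Definition reachable k (A : 'M[R]_k) (B : 'cV[R]_k) : Prop :=
  \rank (reach_mx A B) = k.

End Defs.

(* Main.v *)
Require Import Defs.
From HB Require Import structures.
From mathcomp Require Import all_boot all_order all_algebra.
From mathcomp Require Import all_classical all_reals all_analysis.
From mathcomp Require Import ring zify.
From Stdlib Require Import Lia.
Import Order.TTheory GRing.Theory Num.Theory.
Import numFieldNormedType.Exports.
Local Open Scope classical_set_scope.
Local Open Scope ring_scope.
Set Implicit Arguments. Unset Strict Implicit. Unset Printing Implicit Defensive.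

Section Alg.
Variable R : realType.
Variable n' : nat.
Local Notation n := n'.+1.
Implicit Types (v w a b c : 'I_n -> R).

Definition pol v : {poly R} := \sum_(i < n) v i *: 'X^i.

Lemma size_sum_le I (r : seq I) (P : pred I) (F : I -> {poly R}) N :
  (forall i, P i -> (size (F i) <= N)%N) -> (size (\sum_(i <- r | P i) F i)%R <= N)%N.
Proof.
move=> H; elim/big_rec: _ => [|i p Pi Hp]; first by rewrite size_poly0.
by rewrite (leq_trans (size_polyD _ _)) // geq_max H.
Qed.

Lemma size_pol v : (size (pol v) <= n)%N.
Proof.
apply: size_sum_le => i _; apply: (leq_trans (size_scale_leq _ _)).
by rewrite size_polyXn.
Qed.

Lemma coef_pol v (i : 'I_n) : (pol v)`_i = v i.
Proof.
rewrite /pol coef_sum (bigD1 i) //= coefZ coefXn eqxx mulr1 big1 ?addr0 //.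
move=> j ji; rewrite coefZ coefXn.
have -> : (nat_of_ord i == nat_of_ord j) = false.
  by apply/negbTE; rewrite eq_sym.
by rewrite mulr0.
Qed.

Lemma coef_pol_ge v m : (n <= m)%N -> (pol v)`_m = 0.
Proof. by move=> h; rewrite nth_default // (leq_trans (size_pol v)). Qed.

Lemma polD v w : pol (fun j => v j + w j) = pol v + pol w.
Proof. by rewrite /pol -big_split /=; apply: eq_bigr => i _; rewrite scalerDl. Qed.

Lemma polN v : pol (fun j => - v j) = - pol v.
Proof. by rewrite /pol -sumrN; apply: eq_bigr => i _; rewrite scaleNr. Qed.

Lemma pol_inj v w : pol v = pol w -> v =1 w.
Proof. by move=> h i; rewrite -coef_pol h coef_pol. Qed.

Lemma polM m (P : 'M[R]_(m, n)) (M : 'M[R]_n) (i : 'I_m) :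
  pol (fun j => (P *m M) i j) = \sum_k P i k *: pol (fun j => M k j).
Proof.
rewrite /pol; under eq_bigr do rewrite mxE scaler_suml.
rewrite exchange_big /=; apply: eq_bigr => k _; rewrite scaler_sumr.
by apply: eq_bigr => j _; rewrite scalerA.
Qed.

Lemma mx_pol_inj m (M1 M2 : 'M[R]_(m, n)) :
  (forall i, pol (fun j => M1 i j) = pol (fun j => M2 i j)) -> M1 = M2.
Proof. by move=> h; apply/matrixP => i j; apply: (pol_inj (h i)). Qed.

Lemma den_polyE (c : 'I_n -> R) :
  den_poly c = 'X^n + pol (fun j => c (rev_ord j)).
Proof.
rewrite /den_poly /pol; congr (_ + _).
rewrite (reindex_inj rev_ord_inj) /=; apply: eq_bigr => j _.
by congr (_ *: 'X^_); case: j => j /= hj; lia.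
Qed.

Lemma num_polyE (b : 'I_n -> R) : num_poly b = pol (fun j => b (rev_ord j)).
Proof.
rewrite /num_poly /pol.
rewrite (reindex_inj rev_ord_inj) /=; apply: eq_bigr => j _.
by congr (_ *: 'X^_); case: j => j /= hj; lia.
Qed.

Lemma size_den c : size (den_poly c) = n.+1.
Proof. by rewrite den_polyE size_polyDl size_polyXn // ltnS size_pol. Qed.

Lemma size_num b : (size (num_poly b) <= n)%N.
Proof. by rewrite num_polyE size_pol. Qed.

Lemma den_coef_n c : (den_poly c)`_n = 1.
Proof. by rewrite den_polyE coefD coefXn eqxx coef_pol_ge // addr0. Qed.

Lemma den_coef c (i : 'I_n) : (den_poly c)`_i = c (rev_ord i).
Proof.
rewrite den_polyE coefD coefXn coef_pol.
by rewrite (_ : (nat_of_ord i == n) = false) ?add0r // ltn_eqF.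
Qed.

Lemma pol_comp c (k : 'I_n) :
  pol (fun j => A_comp c k j) = 'X * 'X^k - ((k == n' :> nat)%:R) *: den_poly c.
Proof.
rewrite /pol; under eq_bigr do rewrite mxE.
case: eqP => hk /=.
  rewrite scale1r den_polyE -exprS hk opprD addrA subrr add0r -polN.
  by apply: eq_bigr => j _.
rewrite scale0r subr0 -exprS.
have hk1 : (k.+1 < n)%N by case: k hk => k /= hk hk'; lia.
rewrite (bigD1 (Ordinal hk1)) //= eqxx scale1r big1 ?addr0 // => j hj.
rewrite (_ : (nat_of_ord j == k.+1) = false) ?scale0r //.
by apply/negbTE.
Qed.

Lemma pol_Lb b (k : 'I_n) :
  pol (fun j => L_b b k j) = ((k == n' :> nat)%:R) *: num_poly b.
Proof.
rewrite /pol num_polyE /pol; under eq_bigr do rewrite mxE.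
case: eqP => hk /=; first by rewrite scale1r.
by rewrite scale0r big1 // => j _; rewrite scale0r.
Qed.

Lemma sum_last (F : 'I_n -> {poly R}) :
  \sum_(k < n) ((k == n' :> nat)%:R) *: F k = F ord_max.
Proof.
rewrite (bigD1 ord_max) //= eqxx scale1r big1 ?addr0 // => k hk.
rewrite (_ : (nat_of_ord k == n') = false) ?scale0r //.
by apply/negbTE; move: hk; apply: contra => /eqP h; apply/eqP/val_inj.
Qed.

Lemma pol_mul_comp m (P : 'M[R]_(m, n)) c (i : 'I_m) :
  pol (fun j => (P *m A_comp c) i j) =
  'X * pol (fun j => P i j) - P i ord_max *: den_poly c.
Proof.
rewrite polM; under eq_bigr do rewrite pol_comp scalerBr scalerA mulr_natr.
rewrite sumrB; congr (_ - _).
  by rewrite /pol mulr_sumr; apply: eq_bigr => k _; rewrite scalerAr.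
rewrite (bigD1 ord_max) //= eqxx mulr1n big1 ?addr0 // => k hk.
rewrite (_ : (nat_of_ord k == n') = false) ?mulr0n ?scale0r //.
by apply/negbTE; move: hk; apply: contra => /eqP h; apply/eqP/val_inj.
Qed.

Lemma pol_mul_Lb m (P : 'M[R]_(m, n)) b (i : 'I_m) :
  pol (fun j => (P *m L_b b) i j) = P i ord_max *: num_poly b.
Proof.
rewrite polM; under eq_bigr do rewrite pol_Lb scalerA mulr_natr.
rewrite (bigD1 ord_max) //= eqxx mulr1n big1 ?addr0 // => k hk.
rewrite (_ : (nat_of_ord k == n') = false) ?mulr0n ?scale0r //.
by apply/negbTE; move: hk; apply: contra => /eqP h; apply/eqP/val_inj.
Qed.

End Alg.

Section Reach.
Variable R : realType.
Variable n' : nat.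
Local Notation n := n'.+1.
Variables a b c : 'I_n -> R.
Local Notation D := (den_poly a).
Local Notation N := (num_poly b).
Local Notation G := (den_poly c).

Definition Pw (w : 'rV[R]_(n + n)) : {poly R} :=
  pol (fun j => lsubmx w 0 j) * D + pol (fun j => rsubmx w 0 j) * N.

Lemma Br_last m (P : 'M[R]_(m, n)) i : (P *m B_r n) i 0 = P i ord_max.
Proof.
rewrite mxE (bigD1 ord_max) //= mxE eqxx mulr1 big1 ?addr0 // => k hk.
rewrite mxE (_ : (nat_of_ord k == n') = false) ?mulr0 //.
by apply/negbTE; move: hk; apply: contra => /eqP h; apply/eqP/val_inj.
Qed.

Lemma Pw_A w : Pw (w *m A_f a b c) = 'X * Pw w - (w *m B_f n) 0 0 *: (G * D).
Proof.
rewrite -(hsubmxK w) /A_f /B_f mul_row_block mul_row_col /Pw !row_mxKl !row_mxKr.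
set w1 := lsubmx w; set w2 := rsubmx w.
rewrite !mulmx0 add0r addr0 Br_last.
rewrite (_ : pol _ = pol (fun j => (w1 *m A_r c) 0 j) + pol (fun j => (w2 *m L_b b) 0 j)); last first.
  by rewrite -polD; congr pol; apply/funext => j; rewrite mxE.
rewrite pol_mul_comp pol_mul_Lb /A_a pol_mul_comp.
rewrite -!mul_polyC; ring.
Qed.

Lemma size_Pw w : (size (Pw w) <= n + n)%N.
Proof.
rewrite /Pw (leq_trans (size_polyD _ _)) // geq_max; apply/andP; split.
  rewrite (leq_trans (size_polyMleq _ _)) // size_den.
  by have := size_pol (fun j => lsubmx w 0 j); lia.
rewrite (leq_trans (size_polyMleq _ _)) //.
by have := size_pol (fun j => rsubmx w 0 j); have := size_num b; lia.
Qed.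

Lemma reach_ok : coprimep D N -> \rank (reach_mx (A_f a b c) (B_f n)) = (n + n)%N.
Proof.
move=> cop.
set A := A_f a b c; set B := B_f n; set M := reach_mx A B.
have key : forall v : 'rV[R]_(n + n), v *m M = 0 -> v = 0.
  move=> v hv.
  have h0 : forall j, (j < n + n)%N -> (v *m A ^+ j *m B) 0 0 = 0.
    move=> j hj; have -> : (v *m A ^+ j *m B) 0 0 = (v *m M) 0 (Ordinal hj).
      by rewrite -mulmxA !mxE; apply: eq_bigr => i _; rewrite /M /reach_mx mxE.
    by rewrite hv mxE.
  have hP : forall j, (j <= n + n)%N -> Pw (v *m A ^+ j) = 'X^j * Pw v.
    elim=> [|j IH] hj; first by rewrite expr0 mulmx1 expr0 mul1r.
    rewrite exprSr mulmxA Pw_A IH; last by lia.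
    by rewrite h0 ?scale0r ?subr0 ?exprS ?mulrA //; lia.
  have hPv : Pw v = 0.
    apply/polyP => i; rewrite coef0.
    have := hP _ (leqnn (n + n)) => e.
    have := size_Pw (v *m A ^+ (n + n)); rewrite e => hs.
    have := coefXnM (n + n) (Pw v) (n + n + i).
    rewrite (_ : (n + n + i < n + n)%N = false); last by lia.
    rewrite (_ : (n + n + i - (n + n) = i)%N); last by lia.
    by move=> <-; rewrite nth_default //; apply: leq_trans hs _; apply: leq_addr.
  set p1 := pol (fun j => lsubmx v 0 j) in hPv; set p2 := pol (fun j => rsubmx v 0 j) in hPv.
  have hD0 : D != 0 by rewrite -size_poly_eq0 size_den.
  have hp2 : p2 = 0.
    apply/eqP; apply: contraT => hp2.
    have hdv : D %| p2 * N.
      have -> : p2 * N = - p1 * D.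
        have e : p1 * D + p2 * N = 0 := hPv.
        by rewrite mulNr; apply/eqP; rewrite -addr_eq0 addrC e.
      by rewrite dvdp_mull.
    rewrite (Gauss_dvdpl _ cop) in hdv.
    have := dvdp_leq hp2 hdv; rewrite size_den.
    by rewrite /p2 ltnNge size_pol.
  have hp1 : p1 = 0.
    by move: hPv; rewrite /Pw -/p1 -/p2 hp2 mul0r addr0 => /eqP; rewrite mulf_eq0 (negbTE hD0) orbF => /eqP.
  rewrite -(hsubmxK v); apply/matrixP => i j; rewrite mxE [RHS]mxE.
  case: split_ordP => k _.
    by rewrite (ord1 i) -(coef_pol [eta lsubmx v 0]) -/p1 hp1 coef0.
  by rewrite (ord1 i) -(coef_pol [eta rsubmx v 0]) -/p2 hp2 coef0.
have kz : kermx M = 0.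
  apply/row_matrixP => i; rewrite row0; apply: key.
  by apply/sub_kermxP; exact: row_sub.
have := mxrank_ker M; rewrite kz mxrank0 => h.
by have := rank_leq_row M; lia.
Qed.

End Reach.

Section Kmat.
Variable R : realType.
Variable n' : nat.
Local Notation n := n'.+1.
Variables (c v : 'I_n -> R).
Local Notation G := (den_poly c).
Local Notation vp := (pol v).

Definition rK (m : nat) : {poly R} := vp * drop_poly m G - G * drop_poly m vp.
Definition Kmx : 'M[R]_n := \matrix_(i, j) (rK i.+1)`_j.

Lemma drop_polyS m (p : {poly R}) : drop_poly m p = drop_poly m.+1 p * 'X + (p`_m)%:P.
Proof.
apply/polyP => i; rewrite coefD coefMX coefC !coef_drop_poly.
by case: i => [|i] /=; rewrite ?add0r ?addr0 // addSnnS.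
Qed.

Lemma rK0 : rK 0 = 0.
Proof. by rewrite /rK !drop_poly0l mulrC subrr. Qed.

Lemma rK_rec m : rK m = 'X * rK m.+1 + G`_m *: vp - vp`_m *: G.
Proof.
rewrite /rK (drop_polyS m G) (drop_polyS m vp) -!mul_polyC; ring.
Qed.

Lemma rK_take m : 'X^m * rK m = G * take_poly m vp - vp * take_poly m G.
Proof.
have t1 : take_poly m vp = vp - drop_poly m vp * 'X^m.
  by rewrite -{2}(poly_take_drop m vp) addrK.
have t2 : take_poly m G = G - drop_poly m G * 'X^m.
  by rewrite -{2}(poly_take_drop m G) addrK.
rewrite t1 t2 /rK; ring.
Qed.

Lemma size_rK m : (size (rK m) <= n)%N.
Proof.
have [->|h] := eqVneq (rK m) 0; first by rewrite size_poly0.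
have := congr1 (fun p : {poly R} => size p) (rK_take m).
rewrite /= mulrC (size_mulXn _ h) => e.
have : (size (G * take_poly m vp - vp * take_poly m G)%R <= n + m)%N.
  rewrite (leq_trans (size_polyD _ _)) // size_polyN geq_max; apply/andP; split.
    rewrite (leq_trans (size_polyMleq _ _)) // size_den.
    by have := size_take_poly m vp; lia.
  rewrite (leq_trans (size_polyMleq _ _)) //.
  by apply: leq_trans (leq_pred _) (leq_add (size_pol v) (size_take_poly m G)).
by rewrite -e /=; lia.
Qed.

Lemma rKn : rK n = vp.
Proof.
rewrite /rK (drop_poly_eq0 (size_pol v)) mulr0 subr0.
rewrite den_polyE drop_polyD (drop_poly_eq0 (size_pol _)) addr0.
by rewrite -[X in drop_poly _ X]mul1r drop_polyMXn_id mulr1.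
Qed.

Lemma rK_coef (i : 'I_n) : (rK i.+1)`_n' = v i.
Proof.
have h : (rK i)`_n = ('X * rK i.+1 + G`_i *: vp - vp`_i *: G)`_n by rewrite -rK_rec.
rewrite nth_default ?size_rK // !coefD coefN !coefZ coefXM in h.
rewrite coef_pol_ge // den_coef_n coef_pol mulr0 mulr1 addr0 in h.
by move/eqP: h; rewrite eq_sym subr_eq0 => /eqP.
Qed.

Lemma Kmx_row (i : 'I_n) : pol (fun j => Kmx i j) = rK i.+1.
Proof.
apply/polyP => k; case: (ltnP k n) => hk.
  by rewrite (coef_pol _ (Ordinal hk)) mxE.
by rewrite coef_pol_ge // nth_default // (leq_trans (size_rK _)).
Qed.

Lemma Kmx_last_col (i : 'I_n) : Kmx i ord_max = v i.
Proof. by rewrite mxE rK_coef. Qed.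

Lemma Kmx_last_row (j : 'I_n) : Kmx ord_max j = v j.
Proof. by rewrite mxE /= rKn coef_pol. Qed.

Lemma Kmx_comm : Kmx *m A_comp c = (A_comp c)^T *m Kmx.
Proof.
apply: mx_pol_inj => i.
rewrite pol_mul_comp Kmx_row Kmx_last_col polM.
under eq_bigr do rewrite Kmx_row mxE mxE.
rewrite big_ord_recr /= eqxx.
have -> : \sum_(k < n') (if (widen_ord (leqnSn n') k == n' :> nat) then - c (rev_ord i)
            else ((nat_of_ord i == (widen_ord (leqnSn n') k).+1)%:R)) *: rK (widen_ord (leqnSn n') k).+1
          = rK i.
  case: i => [[|i] hi] /=.
    by rewrite rK0 big1 // => k _; rewrite ltn_eqF // scale0r.
  have hi' : (i < n')%N by lia.
  rewrite (bigD1 (Ordinal hi')) //= ltn_eqF // eqxx scale1r big1 ?addr0 // => k hk.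
  rewrite ltn_eqF //=.
  rewrite (_ : (i.+1 == k.+1) = false) ?scale0r //.
  by apply/negbTE; move: hk; apply: contra => /eqP [h]; apply/eqP/val_inj.
rewrite (rK_rec i) den_coef rKn.
rewrite (_ : vp`_i = v i); last exact: coef_pol.
by rewrite scaleNr; ring.
Qed.

End Kmat.

Section MxId.
Variable R : realType.
Variable n' : nat.
Local Notation n := n'.+1.
Variables a b c : 'I_n -> R.

Definition dv : 'I_n -> R := fun i => c (rev_ord i) - a (rev_ord i).
Definition bv : 'I_n -> R := fun i => b (rev_ord i).
Definition Kb := Kmx c bv.
Definition Kd := Kmx c dv.

Lemma Br_last' m (P : 'M[R]_(m, n)) i : (P *m B_r n) i 0 = P i ord_max.
Proof.
rewrite mxE (bigD1 ord_max) //= mxE eqxx mulr1 big1 ?addr0 // => k hk.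
rewrite mxE (_ : (nat_of_ord k == n') = false) ?mulr0 //.
by apply/negbTE; move: hk; apply: contra => /eqP h; apply/eqP/val_inj.
Qed.

Lemma Cobs_first m (P : 'M[R]_(n, m)) j : (C_obs n *m P) 0 j = P ord_max j.
Proof.
rewrite mxE (bigD1 ord_max) //= mxE eqxx mul1r big1 ?addr0 // => k hk.
rewrite mxE (_ : (nat_of_ord k == n') = false) ?mul0r //.
by apply/negbTE; move: hk; apply: contra => /eqP h; apply/eqP/val_inj.
Qed.

Lemma F1 : A_obs a = (A_comp c)^T + (\col_i dv i) *m C_obs n.
Proof.
apply/matrixP => i j; rewrite !mxE big_ord1 !mxE /dv.
case: eqP => hj.
  by rewrite mulr1; ring.
by rewrite mulr0 addr0.
Qed.

Lemma F2 : Kb *m B_r n = B_obs b.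
Proof. by apply/matrixP => i j; rewrite (ord1 j) Br_last' Kmx_last_col mxE. Qed.

Lemma F3 : Kd *m B_r n = \col_i dv i.
Proof. by apply/matrixP => i j; rewrite (ord1 j) Br_last' Kmx_last_col mxE. Qed.

Lemma F4 v : C_obs n *m Kmx c v = \row_j v j.
Proof. by apply/matrixP => i j; rewrite (ord1 i) Cobs_first Kmx_last_row mxE. Qed.

Lemma F5 : L_b b = B_r n *m \row_j bv j.
Proof.
apply/matrixP => i j; rewrite !mxE big_ord1 !mxE /bv.
by case: eqP => _; rewrite ?mul1r ?mul0r.
Qed.

Lemma F6 : A_comp c = A_comp a - B_r n *m \row_j dv j.
Proof.
apply/matrixP => i j; rewrite !mxE big_ord1 !mxE /dv.
case: eqP => _; rewrite ?mul1r ?mul0r ?subr0 //; ring.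
Qed.

Lemma F7 : G_f n = col_mx 0 (B_r n *m C_obs n) :> 'M[R]_(n + n, n).
Proof.
apply/matrixP => i j; rewrite !mxE.
case: splitP => k hk; rewrite !mxE.
  by rewrite (_ : (nat_of_ord i == (n + n).-1) = false) //; apply/negbTE; rewrite hk; case: k {hk} => /= k; lia.
rewrite big_ord1 !mxE.
rewrite (_ : (\val i == (n + n).-1) = (nat_of_ord k == n')); last first.
  by apply/eqP/eqP; rewrite /= hk; case: k {hk} => /= k hk'; lia.
by case: (nat_of_ord k == n'); case: (nat_of_ord j == n'); rewrite ?mul1r ?mul0r.
Qed.

Lemma y_scale (B : 'cV[R]_n) (x : 'cV[R]_n) :
  (C_obs n *m x) 0 0 *: B = B *m (C_obs n *m x).
Proof. by rewrite {2}[C_obs n *m x]mx11_scalar mul_mx_scalar. Qed.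

Lemma zid1 (V : zmodType) (p s t q r : V) : p + s + t - (q + t) - (r + s) = p - q - r.
Proof.
rewrite [q + t]addrC opprD addrA addrK [r + s]addrC opprD addrA.
by rewrite [p + s - q]addrAC addrK.
Qed.

Lemma zid2 (V : zmodType) (p q g d : V) : p - q + g = d + p + (g - d - q).
Proof.
by rewrite !addrA [d + p]addrC [p + d + g]addrAC addrK addrAC.
Qed.

Lemma z_rhs (xs zs ms : 'cV[R]_n) (us : R) :
  (A_obs a *m xs + us *: B_obs b) - Kb *m (A_r c *m zs + us *: B_r n)
    - Kd *m (A_r c *m ms + (C_obs n *m xs) 0 0 *: B_r n)
  = (A_r c)^T *m (xs - Kb *m zs - Kd *m ms).
Proof.
rewrite !mulmxDr !mulmxN !mulmxA -!scalemxAr F2 F3 /A_r !Kmx_comm.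
rewrite F1 mulmxDl -!mulmxA -!y_scale -/Kb -/Kd.
exact: zid1.
Qed.

Lemma mu_rhs (xs zs ms : 'cV[R]_n) :
  A_r c *m ms + (C_obs n *m xs) 0 0 *: B_r n =
  L_b b *m zs + A_a a *m ms + (B_r n *m C_obs n) *m (xs - Kb *m zs - Kd *m ms).
Proof.
rewrite !mulmxDr !mulmxN !mulmxA -!(mulmxA (B_r n)) !F4 -/Kb -/Kd /A_r /A_a F6 F5.
rewrite y_scale mulmxBl -!mulmxA.
exact: zid2.
Qed.

End MxId.

Section Ode.
Variable R : realType.
Local Notation mu := (@lebesgue_measure R).

Local Notation II t f := (mu.-integrable `[0, t] (EFin \o f)).

Lemma mD (t : R) : measurable (`[0, t] : set (measurableTypeR R)).
Proof. exact: measurable_itv. Qed.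

Lemma II_ext t f g : (forall x, 0 <= x <= t -> f x = g x) -> II t f -> II t g.
Proof.
move=> h; apply: (eq_integrable (mD t)) => x; rewrite inE /= in_itv /= => xD.
by rewrite /comp h.
Qed.

Lemma R_ext t (f g : R -> R) : (forall x, 0 <= x <= t -> f x = g x) ->
  \int[mu]_(x in `[0,t]) f x = \int[mu]_(x in `[0,t]) g x.
Proof.
move=> h; apply: eq_Rintegral => x; rewrite inE /= in_itv /= => xD.
by rewrite h.
Qed.

Lemma II_add t f g : II t f -> II t g -> II t (fun s => f s + g s).
Proof.
move=> hf hg; have := integrableD (mD t) hf hg.
by apply: (eq_integrable (mD t)) => x _.
Qed.

Lemma II_opp t f : II t f -> II t (fun s => - f s).
Proof.
move=> hf; have := integrableN hf.
by apply: (eq_integrable (mD t)) => x _.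
Qed.

Lemma II_sub t f g : II t f -> II t g -> II t (fun s => f s - g s).
Proof. by move=> hf hg; apply: II_add => //; exact: II_opp. Qed.

Lemma II_scale t k f : II t f -> II t (fun s => k * f s).
Proof.
move=> hf; have := integrableZl (mD t) k hf.
by apply: (eq_integrable (mD t)) => x _.
Qed.

Lemma II_cont t f : continuous f -> II t f.
Proof.
move=> cf; apply: continuous_compact_integrable; first exact: segment_compact.
by apply: continuous_subspaceT.
Qed.

Lemma II_sum t I (r : seq I) (P : pred I) (F : I -> R -> R) :
  (forall i, P i -> II t (F i)) -> II t (fun s => \sum_(i <- r | P i) F i s).
Proof.
move=> h; elim: r => [|i r IH].
  apply: (@II_ext t (fun _ => 0)); first by move=> x _; rewrite big_nil.
  by apply: II_cont; exact: cst_continuous.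
case Pi: (P i).
  apply: (@II_ext t (fun s => F i s + \sum_(j <- r | P j) F j s)).
    by move=> x _; rewrite big_cons Pi.
  by apply: II_add => //; exact: h.
by apply: II_ext IH => x _; rewrite big_cons Pi.
Qed.



Lemma II_norm t f : II t f -> II t (fun s => `|f s|).
Proof. by move=> h; have := integrable_norm h. Qed.

Lemma Rint_add t f g : II t f -> II t g ->
  \int[mu]_(s in `[0, t]) (f s + g s) = \int[mu]_(s in `[0, t]) f s + \int[mu]_(s in `[0, t]) g s.
Proof. by move=> hf hg; rewrite RintegralD //; exact: mD. Qed.

Lemma Rint_scale t k f : II t f ->
  \int[mu]_(s in `[0, t]) (k * f s) = k * \int[mu]_(s in `[0, t]) f s.
Proof. by move=> hf; rewrite RintegralZl //; exact: mD. Qed.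

Lemma Rint_opp t f : II t f ->
  \int[mu]_(s in `[0, t]) (- f s) = - \int[mu]_(s in `[0, t]) f s.
Proof.
move=> hf; rewrite (@R_ext t _ (fun s => -1 * f s)); last by move=> x _; rewrite mulN1r.
by rewrite Rint_scale ?mulN1r.
Qed.

Lemma Rint_sub t f g : II t f -> II t g ->
  \int[mu]_(s in `[0, t]) (f s - g s) = \int[mu]_(s in `[0, t]) f s - \int[mu]_(s in `[0, t]) g s.
Proof. by move=> hf hg; rewrite Rint_add ?Rint_opp //; exact: II_opp. Qed.



Lemma Rint_sum t I (r : seq I) (P : pred I) (F : I -> R -> R) :
  (forall i, P i -> II t (F i)) ->
  \int[mu]_(s in `[0, t]) (\sum_(i <- r | P i) F i s) = \sum_(i <- r | P i) \int[mu]_(s in `[0, t]) F i s.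
Proof.
move=> h; elim: r => [|i r IH].
  rewrite big_nil (@R_ext t _ (fun _ => 0)); last by move=> x _; rewrite big_nil.
  by rewrite Rintegral_cst ?mul0r //; exact: mD.
rewrite big_cons; case Pi: (P i).
  rewrite (@R_ext t _ (fun s => F i s + \sum_(j <- r | P j) F j s)); last first.
    by move=> x _; rewrite big_cons Pi.
  by rewrite Rint_add ?IH //; [exact: h | exact: II_sum].
by rewrite -IH; apply: eq_Rintegral => x _; rewrite big_cons Pi.
Qed.

Lemma ode_ext k (z : R -> 'cV[R]_k) F G :
  (forall s, 0 <= s -> F s = G s) -> ode_sol z F -> ode_sol z G.
Proof.
move=> e h t t0 i; have [hi hz] := h t t0 i; split.
  apply: (@II_ext t (fun s => F s i 0)) => //.
  by move=> x /andP [x0 _]; rewrite e.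
rewrite hz; congr (_ + _); apply: R_ext => x /andP [x0 _].
by rewrite e.
Qed.

Lemma ode_zext k (z1 z2 : R -> 'cV[R]_k) F :
  (forall s, 0 <= s -> z1 s = z2 s) -> ode_sol z1 F -> ode_sol z2 F.
Proof.
move=> e h t t0 i; have [hi hz] := h t t0 i; split => //.
by rewrite -!e ?lexx.
Qed.

Lemma ode_sub k (z1 z2 : R -> 'cV[R]_k) F1 F2 :
  ode_sol z1 F1 -> ode_sol z2 F2 ->
  ode_sol (fun s => z1 s - z2 s) (fun s => F1 s - F2 s).
Proof.
move=> h1 h2 t t0 i; have [i1 e1] := h1 t t0 i; have [i2 e2] := h2 t t0 i.
have i3 : II t (fun s => F1 s i 0 - F2 s i 0) by exact: II_sub.
split.
  by apply: II_ext i3 => x _; rewrite !mxE.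
rewrite (@R_ext t _ (fun s => F1 s i 0 - F2 s i 0)); last by move=> x _; rewrite !mxE.
by rewrite !mxE Rint_sub // e1 e2; ring.
Qed.

Lemma ode_mul k m (P : 'M[R]_(m, k)) (z : R -> 'cV[R]_k) F :
  ode_sol z F -> ode_sol (fun s => P *m z s) (fun s => P *m F s).
Proof.
move=> h t t0 i.
have hI : forall j, II t (fun s => P i j * F s j 0).
  by move=> j; apply: II_scale; have [] := h t t0 j.
have i3 : II t (fun s => \sum_j P i j * F s j 0) by apply: II_sum => j _.
split.
  by apply: II_ext i3 => x _; rewrite !mxE.
rewrite (@R_ext t _ (fun s => \sum_j P i j * F s j 0)); last by move=> x _; rewrite !mxE.
rewrite Rint_sum // !mxE -big_split /=; apply: eq_bigr => j _.
by rewrite Rint_scale; [have [_ ->] := h t t0 j; ring | have [] := h t t0 j].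
Qed.

Lemma ode_col k1 k2 (z1 : R -> 'cV[R]_k1) (z2 : R -> 'cV[R]_k2) F1 F2 :
  ode_sol z1 F1 -> ode_sol z2 F2 ->
  ode_sol (fun s => col_mx (z1 s) (z2 s)) (fun s => col_mx (F1 s) (F2 s)).
Proof.
move=> h1 h2 t t0 i; case: (splitP i) => j hj.
  have -> : i = lshift k2 j by apply: val_inj.
  have [hi he] := h1 t t0 j; split.
    by apply: II_ext hi => x _; rewrite /= col_mxEu.
  rewrite /= !col_mxEu he; congr (_ + _); apply: R_ext => x _.
  by rewrite col_mxEu.
have -> : i = rshift k1 j by apply: val_inj.
have [hi he] := h2 t t0 j; split.
  by apply: II_ext hi => x _; rewrite /= col_mxEd.
rewrite /= !col_mxEd he; congr (_ + _); apply: R_ext => x _.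
by rewrite col_mxEd.
Qed.

End Ode.

Section Picard.
Variable R : realType.
Local Notation mu := (@lebesgue_measure R).
Local Notation II t f := (mu.-integrable `[0, t] (EFin \o f)).

Lemma int_pow (j : nat) (s : R) : 0 <= s ->
  \int[mu]_(x in `[0, s]) x ^+ j = s ^+ j.+1 / j.+1%:R.
Proof.
rewrite le_eqVlt => /predU1P[<-|s0].
  by rewrite set_itv1 Rintegral_set1 expr0n /= mul0r.
rewrite /Rintegral.
rewrite (@continuous_FTC2 R (fun x => x ^+ j) (fun x => x ^+ j.+1 / j.+1%:R) 0 s) //.
- by rewrite expr0n /= mul0r subr0.
- apply: continuous_subspaceT => x; exact: exprn_continuous.
- split.
  + move=> x _; apply: derivableM => //; exact: exprn_derivable.
  + apply: cvg_at_right_filter; apply: cvgM; last exact: cvg_cst.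
    exact: exprn_continuous.
  + apply: cvg_at_left_filter; apply: cvgM; last exact: cvg_cst.
    exact: exprn_continuous.
- move=> x _; rewrite derive1E deriveMr; last exact: exprn_derivable.
  rewrite exp_derive /= [X in _ * X]/(_ *: 1) /GRing.scale /= mulr1 mulrA mulVf ?mul1r //.
Qed.

Lemma II_mono t (j : nat) (al : R) : II t (fun s => s ^+ j * al).
Proof.
apply: (@II_ext _ t (fun s => (al *: 'X^j : {poly R}).[s])).
  by move=> x _; rewrite hornerZ hornerXn mulrC.
apply: continuous_compact_integrable; first exact: segment_compact.
by apply: continuous_subspaceT; exact: (@continuous_horner R _).
Qed.

Lemma int_mono t (j : nat) (al : R) : 0 <= t ->
  \int[mu]_(s in `[0, t]) (s ^+ j * al) = t ^+ j.+1 / j.+1%:R * al.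
Proof.
move=> t0; rewrite (@R_ext _ t _ (fun s => al * s ^+ j)); last by move=> x _; rewrite mulrC.
rewrite Rint_scale; last first.
  apply: (@II_ext _ t (fun s => s ^+ j * 1)); first by move=> x _; rewrite mulr1.
  exact: II_mono.
by rewrite int_pow // mulrC.
Qed.

Lemma Rint_mono_dom (s T : R) g : 0 <= s <= T -> II T g -> (forall x, 0 <= g x) ->
  \int[mu]_(x in `[0, s]) g x <= \int[mu]_(x in `[0, T]) g x.
Proof.
move=> /andP[s0 sT] hT g0.
have sub : (`[0, s] : set R) `<=` `[0, T].
  by move=> x /=; rewrite !in_itv /= => /andP[-> xs] /=; exact: le_trans xs sT.
have hs : II s g.
  apply: integrableS hT; [exact: mD | exact: mD | exact: sub].
rewrite /Rintegral fine_le //.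
- exact: integrable_fin_num hs.
- exact: integrable_fin_num hT.
apply: ge0_subset_integral; [exact: mD | exact: mD | | | exact: sub].
  exact: (measurable_int mu hT).
by move=> x _; rewrite lee_fin.
Qed.

End Picard.

Section Picard2.
Variable R : realType.
Local Notation mu := (@lebesgue_measure R).
Local Notation II t f := (mu.-integrable `[0, t] (EFin \o f)).
Variable k : nat.
Variable M : 'M[R]_k.

Definition Sp (z0 : 'cV[R]_k) (m : nat) (t : R) : 'cV[R]_k :=
  \sum_(j < m) (t ^+ j / (j`!)%:R) *: (M ^+ j *m z0).

Lemma Sp_entry z0 m t i :
  Sp z0 m t i 0 = \sum_(j < m) t ^+ j * ((M ^+ j *m z0) i 0 / (j`!)%:R).
Proof.
rewrite /Sp summxE; apply: eq_bigr => j _; rewrite mxE.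
by ring.
Qed.

Lemma MSp_entry z0 m t i :
  (M *m Sp z0 m t) i 0 = \sum_(j < m) t ^+ j * ((M ^+ j.+1 *m z0) i 0 / (j`!)%:R).
Proof.
rewrite /Sp mulmx_sumr summxE; apply: eq_bigr => j _.
rewrite -scalemxAr mulmxA mxE.
have -> : M *m M ^+ j = M ^+ j.+1 by rewrite exprS mulmxE.
by ring.
Qed.

Lemma int_MSp z0 m t i : 0 <= t ->
  II t (fun s => (M *m Sp z0 m s) i 0) /\
  \int[mu]_(s in `[0, t]) (M *m Sp z0 m s) i 0 = Sp z0 m.+1 t i 0 - z0 i 0.
Proof.
move=> t0.
have e : forall s, 0 <= s <= t -> (M *m Sp z0 m s) i 0 =
   \sum_(j < m) (s ^+ j * ((M ^+ j.+1 *m z0) i 0 / (j`!)%:R)).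
  by move=> s _; rewrite MSp_entry.
have hI : II t (fun s => \sum_(j < m) (s ^+ j * ((M ^+ j.+1 *m z0) i 0 / (j`!)%:R))).
  by apply: II_sum => j _; exact: II_mono.
split.
  by apply: II_ext hI => s hs; rewrite e.
rewrite (R_ext e) Rint_sum; last by move=> j _; exact: II_mono.
rewrite Sp_entry big_ord_recl /= expr0 mul1r fact0 divr1 expr0 mul1mx addrC addKr.
apply: eq_bigr => j _; rewrite int_mono //= /bump /= add1n.
rewrite factS natrM invfM; ring.
Qed.

Definition Csum : R := \sum_i \sum_j `|M i j|.

Lemma Csum_ge0 : 0 <= Csum.
Proof. by apply: sumr_ge0 => i _; apply: sumr_ge0 => j _. Qed.

Lemma row_le_C (i : 'I_k) : \sum_j `|M i j| <= Csum.
Proof.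
rewrite /Csum [X in _ <= X](bigD1 i) //= lerDl; apply: sumr_ge0 => l _; exact: sumr_ge0.
Qed.

Lemma col_le_C (j : 'I_k) : \sum_q `|M q j| <= Csum.
Proof.
apply: ler_sum => q _; rewrite [X in _ <= X](bigD1 j) //= lerDl; exact: sumr_ge0.
Qed.

Lemma Mvec_bound (d : 'cV[R]_k) (B : R) i :
  (forall j, `|d j 0| <= B) -> `|(M *m d) i 0| <= Csum * B.
Proof.
move=> hB; have B0 : 0 <= B by exact: le_trans (hB i).
rewrite mxE (le_trans (ler_norm_sum _ _ _)) //.
apply: (@le_trans _ _ (\sum_j `|M i j| * B)).
  by apply: ler_sum => j _; rewrite normrM ler_wpM2l.
by rewrite -mulr_suml ler_wpM2r // row_le_C.
Qed.

Lemma pow_bound l (i j : 'I_k) : `|(M ^+ l) i j| <= Csum ^+ l.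
Proof.
elim: l i j => [|l IH] i j.
  rewrite expr0 mxE; case: (i == j); rewrite ?normr1 ?normr0 //.
rewrite exprSr -mulmxE mxE (le_trans (ler_norm_sum _ _ _)) //.
apply: (@le_trans _ _ (\sum_q Csum ^+ l * `|M q j|)).
  by apply: ler_sum => q _; rewrite normrM ler_wpM2r.
by rewrite -mulr_sumr exprSr ler_wpM2l ?exprn_ge0 ?Csum_ge0 // col_le_C.
Qed.

Lemma picard_bound (z : R -> 'cV[R]_k) (T : R) :
  ode_sol z (fun s => M *m z s) -> 0 <= T ->
  exists K0, forall m s i, 0 <= s <= T ->
    `|z s i 0 - Sp (z 0) m s i 0| <= K0 * ((Csum * s) ^+ m / (m`!)%:R).
Proof.
move=> hz T0.
pose K0 := \sum_i (`|z 0 i 0| + \int[mu]_(s in `[0, T]) `|(M *m z s) i 0|).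
exists K0; elim=> [|m IH] s i /andP[s0 sT].
  rewrite /Sp big_ord0 mxE subr0 expr0 fact0 divr1 mulr1.
  have [hI he] := hz s s0 i; have [hIT _] := hz T T0 i.
  rewrite he (le_trans (ler_normD _ _)) //.
  apply: (@le_trans _ _ (`|z 0 i 0| + \int[mu]_(x in `[0, T]) `|(M *m z x) i 0|)).
    rewrite lerD2l; apply: le_trans (le_normr_Rintegral (mD s) hI) _.
    apply: (@Rint_mono_dom _ s T (fun x => `|(M *m z x) i 0|)).
    - by rewrite s0 sT.
    - exact: II_norm.
    - by move=> x.
  rewrite /K0 (bigD1 i) //= lerDl; apply: sumr_ge0 => l _.
  by apply: addr_ge0 => //; apply: Rintegral_ge0.
have [hI he] := hz s s0 i; have [hI2 he2] := int_MSp (z 0) m i s0.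
have hd : II s (fun r => (M *m z r) i 0 - (M *m Sp (z 0) m r) i 0) by exact: II_sub.
have -> : z s i 0 - Sp (z 0) m.+1 s i 0 =
   \int[mu]_(r in `[0, s]) ((M *m z r) i 0 - (M *m Sp (z 0) m r) i 0).
  rewrite Rint_sub // he he2; ring.
apply: le_trans (le_normr_Rintegral (mD s) hd) _.
pose cst := Csum * (K0 * Csum ^+ m / (m`!)%:R).
apply: (@le_trans _ _ (\int[mu]_(r in `[0, s]) (r ^+ m * cst))).
  apply: le_Rintegral; [exact: mD | exact: II_norm | exact: II_mono |].
  move=> r; rewrite /= in_itv /= => /andP[r0 rs].
  have -> : (M *m z r) i 0 - (M *m Sp (z 0) m r) i 0 = (M *m (z r - Sp (z 0) m r)) i 0.
    by rewrite mulmxBr !mxE.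
  apply: (@le_trans _ _ (Csum * (K0 * ((Csum * r) ^+ m / (m`!)%:R)))).
    apply: Mvec_bound => j; rewrite !mxE.
    have := IH r j; rewrite r0 (le_trans rs sT) => /(_ isT).
    by [].
  by rewrite /cst exprMn le_eqVlt; apply/orP; left; apply/eqP; ring.
rewrite int_mono // /cst factS natrM invfM exprMn !exprS.
by rewrite le_eqVlt; apply/orP; left; apply/eqP; ring.
Qed.

End Picard2.

Section Picard3.
Variable R : realType.
Variable k : nat.
Variable M : 'M[R]_k.

Lemma cvg_sum_seq (I : Type) (r : seq I) (f : I -> nat -> R) (l : I -> R) :
  (forall i, f i @ \oo --> l i) ->
  (fun m => \sum_(i <- r) f i m) @ \oo --> \sum_(i <- r) l i.
Proof.
move=> h; elim: r => [|i r IH].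
  rewrite big_nil; under eq_fun do rewrite big_nil; exact: cvg_cst.
rewrite big_cons; under eq_fun do rewrite big_cons.
exact: cvgD.
Qed.

Lemma mexp_entry_cvg (t : R) (i j : 'I_k) :
  cvgn (fun m => \sum_(l < m) (t ^+ l / (l`!)%:R) * (M ^+ l) i j).
Proof.
pose u := fun l : nat => (t ^+ l / (l`!)%:R) * (M ^+ l) i j.
have -> : (fun m => \sum_(l < m) (t ^+ l / (l`!)%:R) * (M ^+ l) i j) = series u.
  by apply/funext => m; rewrite /series /= big_mkord.
apply: (@normed_cvg _ R^o).
apply: (@series_le_cvg _ _ (exp_coeff (Csum M * `|t|))).
- by move=> l /=.
- by move=> l; rewrite /exp_coeff /= divr_ge0 ?exprn_ge0 ?mulr_ge0 ?Csum_ge0.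
- move=> l; rewrite /u /exp_coeff /= normrM normf_div normr_nat normrX.
  rewrite exprMn mulrC [_ * `|t| ^+ l]mulrC mulrA.
  apply: ler_wpM2r; first by rewrite invr_ge0.
  by rewrite mulrC ler_wpM2l ?exprn_ge0 // pow_bound.
- exact: is_cvg_series_exp_coeff.
Qed.

Lemma picard (z : R -> 'cV[R]_k) :
  ode_sol z (fun s => M *m z s) -> forall t, 0 <= t -> z t = mexp M t *m z 0.
Proof.
move=> hz t t0; apply/matrixP => i j; rewrite (ord1 j) {j}.
have [K0 hK] := picard_bound hz t0.
have hA : (fun m => Sp M (z 0) m t i 0) @ \oo --> z t i 0.
  have hw : (fun m => z t i 0 - Sp M (z 0) m t i 0) @ \oo --> 0.
    have he : (fun m => K0 * exp_coeff (Csum M * t) m) @ \oo --> 0.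
      rewrite -(mulr0 K0); apply: cvgMr.
      exact: (cvg_series_cvg_0 (@is_cvg_series_exp_coeff R _)).
    have hnear : \forall m \near \oo, - (K0 * exp_coeff (Csum M * t) m) <=
        z t i 0 - Sp M (z 0) m t i 0 <= K0 * exp_coeff (Csum M * t) m.
      near=> m; rewrite -ler_norml; have := hK m t i; rewrite t0 lexx => /(_ isT).
      by rewrite /exp_coeff.
    have hf : (fun m => - (K0 * exp_coeff (Csum M * t) m)) @ \oo --> 0.
      by rewrite -oppr0; apply: cvgN.
    exact: (squeeze_cvgr hnear hf he).
  have e : (fun m => Sp M (z 0) m t i 0) = (fun m => z t i 0 - (z t i 0 - Sp M (z 0) m t i 0)).
    by apply/funext => m; ring.
  rewrite e -[X in _ --> X](subr0 (z t i 0)); exact: cvgB (cvg_cst _) hw.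
have hB : (fun m => Sp M (z 0) m t i 0) @ \oo -->
            \sum_l limn (fun m => \sum_(q < m) (t ^+ q / (q`!)%:R) * (M ^+ q) i l) * z 0 l 0.
  have hl : forall l : 'I_k, (fun m => (\sum_(q < m) (t ^+ q / (q`!)%:R) * (M ^+ q) i l) * z 0 l 0) @ \oo -->
      limn (fun m => \sum_(q < m) (t ^+ q / (q`!)%:R) * (M ^+ q) i l) * z 0 l 0.
    by move=> l; apply: cvgMl; exact: mexp_entry_cvg.
  have H := @cvg_sum_seq _ (index_enum 'I_k) _ _ hl.
  have e : (fun m => Sp M (z 0) m t i 0) =
     (fun m => \sum_(l <- index_enum 'I_k) (\sum_(q < m) (t ^+ q / (q`!)%:R) * (M ^+ q) i l) * z 0 l 0).
    apply/funext => m.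
    rewrite /Sp summxE /=.
    under [RHS]eq_bigr do rewrite mulr_suml.
    rewrite exchange_big /=; apply: eq_bigr => q _.
    rewrite mxE mxE mulr_sumr; apply: eq_bigr => l _.
    by ring.
  by rewrite e.
rewrite mxE; under eq_bigr do rewrite mxE.
have e1 := cvg_lim (@Rhausdorff R) hA; have e2 := cvg_lim (@Rhausdorff R) hB.
by rewrite -e1; exact: e2.
Unshelve. all: by end_near.
Qed.

End Picard3.

Unset Implicit Arguments.

Theorem theorem1 (R : realType) (n : nat) (a b : 'I_n -> R) :
  (0 < n)%N ->
  coprimep (den_poly a) (num_poly b) ->
  forall (c : 'I_n -> R) (x0 : 'cV[R]_n) (u : R -> R)
         (x zeta mu : R -> 'cV[R]_n),
  loc_integrable u ->
  x 0 = x0 ->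
  ode_sol x (fun s => A_obs a *m x s + u s *: B_obs b) ->
  zeta 0 = 0 ->
  ode_sol zeta (fun s => A_r c *m zeta s + u s *: B_r n) ->
  mu 0 = 0 ->
  ode_sol mu (fun s => A_r c *m mu s + (C_obs n *m x s) 0 0 *: B_r n) ->
  ode_sol (fun s => col_mx (zeta s) (mu s))
    (fun s => A_f a b c *m col_mx (zeta s) (mu s) + u s *: B_f n
              + G_f n *m (mexp (A_r c)^T s *m x0))
  /\ reachable (A_f a b c) (B_f n).
Proof.
case: n a b => [//|n'] a b _ cop c x0 u x zeta mu _ hx0 hx hz0 hz hm0 hm.
split; last exact: (reach_ok c cop).
pose z := fun s => x s - Kb b c *m zeta s - Kd a c *m mu s.
have hzode : ode_sol z (fun s => (A_r c)^T *m z s).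
  have h1 := ode_sub (ode_sub hx (ode_mul (Kb b c) hz)) (ode_mul (Kd a c) hm).
  by apply: ode_ext h1 => s _; exact: z_rhs.
have hz0' : z 0 = x0 by rewrite /z hz0 hm0 hx0 !mulmx0 !subr0.
have hzexp : forall s, 0 <= s -> z s = mexp (A_r c)^T s *m x0.
  by move=> s s0; rewrite -hz0'; exact: picard hzode s s0.
have hcol := ode_col hz hm.
apply: ode_ext hcol => s s0.
rewrite -hzexp // F7 /A_f /B_f mul_block_col mul_col_mx scale_col_mx !add_col_mx.
rewrite !mul0mx scaler0 !addr0; congr col_mx.
by rewrite /z (mu_rhs a b c (x s) (zeta s) (mu s)).
Qed.
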